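(* Assume that for every $k\ge1$ the function $\hat{\mathcal L}(\cdot,y_k)$ is convex, that $\tau_1\tau_2\|K\|^2\le1/4$ and $\tau_1\le1/(4L)$, and let $(x_*,y_* )$ be a saddle point of $\Phi$. Set \[\Delta_0:=\frac{\|x_*-x_0\|^2}{2\tau_1}+\frac{\|y_*-y_0\|^2}{2\tau_2}.\] Then for every $N\ge1$ there exists $k_0\le N$ such that \[r^y_{k_0}\in\partial\big[-\hat{\mathcal L}(x_{k_0},\cdot)+h_2\big](y_{k_0}),\qquad r^x_{k_0}\in\partial_{\varepsilon_{k_0}}\big[\hat{\mathcal L}(\cdot,y_{k_0})+h_1\big](x_{k_0}),\] and \[\|r^y_{k_0}\|\le\frac{\sqrt{3\Delta_0}}{\sqrt{\tau_2N}},\qquad\|r^x_{k_0}\|\le\frac{2\sqrt{\Delta_0}}{\sqrt{\tau_1N}},\qquad\varepsilon_{k_0}\le\frac{\Delta_0}{2N},\] where $r^y_k:=(y^{k-1}-y^k)/\tau_2$, $r^x_k:=(x_{k-1}-x_k)/\tau_1$ and $\varepsilon_k:=\hat{\mathcal L}(x_k,y_k)-\ell_{\hat{\mathcal L}(\cdot,y_k)}(x_k;x_{k-1})$.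
   Context: Let $n,m_1,m_2$ be positive integers, $Q\in\mathbb R^{n\times n}$ symmetric, $c\in\mathbb R^n$, $A\in\mathbb R^{m_1\times n}$, $b\in\mathbb R^{m_1}$, $B\in\mathbb R^{m_2\times n}$, $d\in\mathbb R^{m_2}$. Let $K:=-\begin{pmatrix}A\\ B\end{pmatrix}$ and $r:=(b;d)$. Fix $\rho\ge0$ and let $\mathbf 1$ be the all-ones vector. Define $\hat{\mathcal L}(x,y):=\langle x,Qx\rangle+\langle c,x\rangle+\langle y,Kx+r\rangle+\rho\langle x,\mathbf 1-x\rangle$, with $\nabla_x\hat{\mathcal L}(x,y)=c+\rho\mathbf 1+K^\top y+2Qx-2\rho x$, $\nabla_y\hat{\mathcal L}(x,y)=Kx+r$. Let $Y:=\mathbb R_+^{m_1}\times\mathbb R^{m_2}$, $h_1$ the indicator of $[0,1]^n$, $h_2$ the indicator of $Y$ ($0$ on the set, $+\infty$ outside), $\Phi(x,y):=\hat{\mathcal L}(x,y)+h_1(x)-h_2(y)$. A saddle point $(x_*,y_* )$ satisfies $\Phi(x_*,y)\le\Phi(x_*,y_* )\le\Phi(x,y_* )$ for all $x,y$. $L:=2(\|Q\|+\rho)$ with spectral norm. For differentiable $f$, $\ell_f(x;x'):=f(x')+\langle\nabla f(x'),x-x'\rangle$. For convex $g$, $\partial g$ is the subdifferential and $\partial_\varepsilon g(x):=\{v:g(z)\ge g(x)+\langle v,z-x\rangle-\varepsilon\ \forall z\}$. PDHG iterates with $\tau_1,\tau_2>0$: $x_0\in[0,1]^n$, $y_0\in\mathbb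 R^{m_1+m_2}$, $x_{-1}:=x_0$, $\bar x_0:=x_0$, and for $k\ge1$: $y_k=\Pi_Y(y_{k-1}+\tau_2(K\bar x_{k-1}+r))$, $x_k=\Pi_{[0,1]^n}(x_{k-1}-\tau_1\nabla_x\hat{\mathcal L}(x_{k-1},y_k))$, $\bar x_k=2x_k-x_{k-1}$ ($\Pi$ = Euclidean projection). Also $y^0:=y_0$ and $y^k:=y_k+\tau_2K(\bar x_k-x_k)$ for $k\ge1$. *)

(* Defs.v *)
From HB Require Import structures.
From mathcomp Require Import all_boot all_order all_algebra.
From mathcomp Require Import all_classical all_reals all_analysis.
Set Implicit Arguments. Unset Strict Implicit. Unset Printing Implicit Defensive.
Import Order.TTheory GRing.Theory Num.Theory.
Local Open Scope ring_scope.
Local Open Scope classical_set_scope.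

Section Defs.
Context {R : realType}.

Definition dotv {n} (u v : 'cV[R]_n) : R := \sum_(i < n) u i 0 * v i 0.
Definition vnorm {n} (u : 'cV[R]_n) : R := Num.sqrt (dotv u u).

Definition opnorm {m n} (M : 'M[R]_(m, n)) : R :=
  sup [set vnorm (M *m u) | u in [set u : 'cV[R]_n | vnorm u <= 1]].

Local Unset Implicit Arguments.
Definition box (n : nat) : set 'cV[R]_n := [set u | forall i, 0 <= u i 0 <= 1].
Definition Yset (m1 m2 : nat) : set 'cV[R]_(m1 + m2) :=
  [set v | forall i : 'I_m1, 0 <= v (lshift m2 i) 0].

Local Set Implicit Arguments.
Definition ext_indic {T} (C : set T) (u : T) : \bar R :=
  if `[< C u >] then 0%E else +oo%E.

Definition is_proj {n} (C : set 'cV[R]_n) (v p : 'cV[R]_n) : Prop :=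
  C p /\ forall z, C z -> vnorm (p - v) <= vnorm (z - v).

Variables (n m1 m2 : nat) (Q : 'M[R]_n) (c : 'cV[R]_n) (A : 'M[R]_(m1, n))
  (b : 'cV[R]_m1) (B : 'M[R]_(m2, n)) (d : 'cV[R]_m2) (rho : R).

Definition Kmat : 'M[R]_(m1 + m2, n) := - col_mx A B.
Definition rvec : 'cV[R]_(m1 + m2) := col_mx b d.
Definition ones : 'cV[R]_n := const_mx 1.

Definition Lhat (u : 'cV[R]_n) (v : 'cV[R]_(m1 + m2)) : R :=
  dotv u (Q *m u) + dotv c u + dotv v (Kmat *m u + rvec) + rho * dotv u (ones - u).

Definition gradx (u : 'cV[R]_n) (v : 'cV[R]_(m1 + m2)) : 'cV[R]_n :=
  c + rho *: ones + Kmat^T *m v + 2%:R *: (Q *m u) - (2%:R * rho) *: u.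

Definition Phi (u : 'cV[R]_n) (v : 'cV[R]_(m1 + m2)) : \bar R :=
  ((Lhat u v)%:E + ext_indic (box n) u - ext_indic (Yset m1 m2) v)%E.

Definition Lconst : R := 2%:R * (opnorm Q + rho).

End Defs.

Section Defs2.
Context {R : realType}.

Definition saddle {U V} (F : U -> V -> \bar R) (us : U) (vs : V) : Prop :=
  (forall v, F us v <= F us vs)%E /\ (forall u, F us vs <= F u vs)%E.

Definition linz {n} (f : 'cV[R]_n -> R) (gf : 'cV[R]_n -> 'cV[R]_n)
  (u u' : 'cV[R]_n) : R := f u' + dotv (gf u') (u - u').

Definition convex_fun {n} (f : 'cV[R]_n -> R) : Prop :=
  forall u w (t : R), 0 <= t <= 1 ->
    f (t *: u + (1 - t) *: w) <= t * f u + (1 - t) * f w.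

Definition eps_subdiff {n} (g : 'cV[R]_n -> \bar R) (eps : R) (u v : 'cV[R]_n) : Prop :=
  forall z, (g u + (dotv v (z - u) - eps)%:E <= g z)%E.
Definition subdiff {n} (g : 'cV[R]_n -> \bar R) (u v : 'cV[R]_n) : Prop :=
  eps_subdiff g 0 u v.

(* extrapolation xbar_k = 2 x_k - x_{k-1}, with x_{-1} := x_0 (so xbar_0 = x_0) *)
Definition xbar {n} (x : nat -> 'cV[R]_n) (k : nat) : 'cV[R]_n :=
  2%:R *: x k - x k.-1.

Definition yup {n m} (K : 'M[R]_(m, n)) (tau2 : R) (x : nat -> 'cV[R]_n)
  (y : nat -> 'cV[R]_m) (k : nat) : 'cV[R]_m :=
  if k == 0%N then y 0%N else y k + tau2 *: (K *m (xbar x k - x k)).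

End Defs2.

(* Main.v *)
Require Import Defs.
From HB Require Import structures.
From mathcomp Require Import all_boot all_order all_algebra.
From mathcomp Require Import all_classical all_reals all_analysis.
From mathcomp Require Import ring lra.
Set Implicit Arguments. Unset Strict Implicit. Unset Printing Implicit Defensive.
Import Order.TTheory GRing.Theory Num.Theory.
Local Open Scope ring_scope.
Local Open Scope classical_set_scope.
Section Vec.
Context {R : realType}.
Implicit Types (a t : R).

Lemma dotvC n (u v : 'cV[R]_n) : dotv u v = dotv v u.
Proof. by rewrite /dotv; apply: eq_bigr => i _; rewrite mulrC. Qed.

Lemma dotvDl n (u v w : 'cV[R]_n) : dotv (u + v) w = dotv u w + dotv v w.
Proof. by rewrite /dotv -big_split; apply: eq_bigr => i _; rewrite mxE mulrDl. Qed.

Lemma dotvZl n a (u w : 'cV[R]_n) : dotv (a *: u) w = a * dotv u w.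
Proof. by rewrite /dotv mulr_sumr; apply: eq_bigr => i _; rewrite mxE mulrA. Qed.

Lemma dotvNl n (u w : 'cV[R]_n) : dotv (- u) w = - dotv u w.
Proof. by rewrite -scaleN1r dotvZl mulN1r. Qed.

Lemma dotvBl n (u v w : 'cV[R]_n) : dotv (u - v) w = dotv u w - dotv v w.
Proof. by rewrite dotvDl dotvNl. Qed.

Lemma dotvDr n (u v w : 'cV[R]_n) : dotv w (u + v) = dotv w u + dotv w v.
Proof. by rewrite dotvC dotvDl !(dotvC w). Qed.

Lemma dotvZr n a (u w : 'cV[R]_n) : dotv w (a *: u) = a * dotv w u.
Proof. by rewrite dotvC dotvZl dotvC. Qed.

Lemma dotvNr n (u w : 'cV[R]_n) : dotv w (- u) = - dotv w u.
Proof. by rewrite dotvC dotvNl dotvC. Qed.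

Lemma dotvBr n (u v w : 'cV[R]_n) : dotv w (u - v) = dotv w u - dotv w v.
Proof. by rewrite dotvDr dotvNr. Qed.

Lemma dotv0l n (w : 'cV[R]_n) : dotv 0 w = 0.
Proof. by rewrite /dotv big1 // => i _; rewrite mxE mul0r. Qed.

Lemma dotv0r n (w : 'cV[R]_n) : dotv w 0 = 0.
Proof. by rewrite dotvC dotv0l. Qed.

Lemma dotv_ge0 n (u : 'cV[R]_n) : 0 <= dotv u u.
Proof. by rewrite /dotv; apply: sumr_ge0 => i _; rewrite -expr2 sqr_ge0. Qed.

Lemma vnorm_ge0 n (u : 'cV[R]_n) : 0 <= vnorm u.
Proof. exact: sqrtr_ge0. Qed.

Lemma vnorm_sqr n (u : 'cV[R]_n) : vnorm u ^+ 2 = dotv u u.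
Proof. by rewrite /vnorm sqr_sqrtr // dotv_ge0. Qed.

Lemma vnormZ n a (u : 'cV[R]_n) : vnorm (a *: u) = `|a| * vnorm u.
Proof.
by rewrite /vnorm dotvZl dotvZr mulrA -expr2 sqrtrM ?sqr_ge0 // sqrtr_sqr.
Qed.

Lemma vnormN n (u : 'cV[R]_n) : vnorm (- u) = vnorm u.
Proof. by rewrite /vnorm dotvNl dotvNr opprK. Qed.

Lemma vnorm_sub n (u v : 'cV[R]_n) : vnorm (u - v) = vnorm (v - u).
Proof. by rewrite -vnormN opprB. Qed.

Lemma quad_disc (a b c : R) : 0 <= c ->
  (forall t, 0 <= a + 2%:R * t * b + t ^+ 2 * c) -> b ^+ 2 <= a * c.
Proof.
move=> c0 H; have [cz|cp] := eqVneq c 0.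
  have [bz|bn] := eqVneq b 0; first by rewrite bz cz; lra.
  have := H (- (a + 1) / (2%:R * b)); rewrite cz mulr0 addr0.
  have -> : 2%:R * (- (a + 1) / (2%:R * b)) * b = - (a + 1).
    by field.
  lra.
have cgt : 0 < c by rewrite lt_def cp c0.
have := H (- b / c).
have -> : a + 2%:R * (- b / c) * b + (- b / c) ^+ 2 * c = (a * c - b ^+ 2) / c.
  by field.
by rewrite pmulr_lge0 ?invr_gt0 // subr_ge0.
Qed.

Lemma cauchy_schwarz2 n (u v : 'cV[R]_n) : dotv u v ^+ 2 <= dotv u u * dotv v v.
Proof.
apply: quad_disc; first exact: dotv_ge0.
move=> t; have := dotv_ge0 (u + t *: v).
rewrite !dotvDl !dotvDr !dotvZl !dotvZr (dotvC v u).
by move=> h; apply: le_trans h _; rewrite le_eqVlt; apply/orP; left; apply/eqP; ring.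
Qed.

Lemma cauchy_schwarz n (u v : 'cV[R]_n) : `|dotv u v| <= vnorm u * vnorm v.
Proof.
rewrite /vnorm -sqrtrM ?dotv_ge0 // -(sqrtr_sqr (dotv u v)).
by rewrite ler_sqrt ?cauchy_schwarz2 // mulr_ge0 ?dotv_ge0.
Qed.

Lemma dotv_le n (u v : 'cV[R]_n) : dotv u v <= vnorm u * vnorm v.
Proof. exact: le_trans (ler_norm _) (cauchy_schwarz u v). Qed.

Lemma dotv_ge n (u v : 'cV[R]_n) : - (vnorm u * vnorm v) <= dotv u v.
Proof. by rewrite lerNl -dotvNl -(vnormN u) dotv_le. Qed.

Lemma dotv_mulmx m n (M : 'M[R]_(m, n)) (u : 'cV[R]_m) (v : 'cV[R]_n) :
  dotv u (M *m v) = dotv (M^T *m u) v.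
Proof.
rewrite /dotv.
under eq_bigr do rewrite mxE mulr_sumr.
under [RHS]eq_bigr do rewrite mxE mulr_suml.
rewrite exchange_big /=; apply: eq_bigr => i _; apply: eq_bigr => j _.
by rewrite mxE mulrCA mulrA.
Qed.

End Vec.
Section Vec2.
Context {R : realType}.
Implicit Types (a t : R).

Lemma mx_bound m n (M : 'M[R]_(m, n)) :
  exists C, 0 <= C /\ forall u, vnorm (M *m u) <= C * vnorm u.
Proof.
pose F := \sum_(i < m) dotv (row i M)^T (row i M)^T.
have F0 : 0 <= F by apply: sumr_ge0 => i _; apply: dotv_ge0.
exists (Num.sqrt F); split; first exact: sqrtr_ge0.
move=> u; rewrite /vnorm -sqrtrM // ler_sqrt; last by rewrite mulr_ge0 ?dotv_ge0.
rewrite /F mulr_suml /dotv; apply: ler_sum => i _.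
have -> : (M *m u) i 0 = dotv (row i M)^T u.
  by rewrite /dotv mxE; apply: eq_bigr => j _; rewrite !mxE.
rewrite -expr2; exact: cauchy_schwarz2.
Qed.

Lemma opnorm_le m n (M : 'M[R]_(m, n)) u :
  vnorm (M *m u) <= opnorm M * vnorm u.
Proof.
have [C [C0 HC]] := mx_bound M.
set E := [set vnorm (M *m w) | w in [set w : 'cV[R]_n | vnorm w <= 1]].
have ubE : has_ubound E.
  exists C => _ [w /= w1 <-]; apply: le_trans (HC w) _.
  by rewrite -[leRHS]mulr1 ler_wpM2l.
have [u0|upos] := eqVneq (vnorm u) 0.
  rewrite u0 mulr0; apply: le_trans (HC u) _; by rewrite u0 mulr0.
have ugt : 0 < vnorm u by rewrite lt_def upos vnorm_ge0.
pose w := (vnorm u)^-1 *: u.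
have w1 : vnorm w = 1.
  by rewrite /w vnormZ ger0_norm ?invr_ge0 ?vnorm_ge0 // mulVf.
have Ew : E (vnorm (M *m w)) by exists w => //=; rewrite w1.
have := ub_le_sup ubE Ew.
rewrite /w -scalemxAr vnormZ ger0_norm ?invr_ge0 ?vnorm_ge0 //.
by rewrite ler_pdivrMl // mulrC.
Qed.

Lemma opnorm_ge0 m n (M : 'M[R]_(m, n)) : 0 <= opnorm M.
Proof.
have [C [C0 HC]] := mx_bound M.
set E := [set vnorm (M *m w) | w in [set w : 'cV[R]_n | vnorm w <= 1]].
have ubE : has_ubound E.
  exists C => _ [w /= w1 <-]; apply: le_trans (HC w) _.
  by rewrite -[leRHS]mulr1 ler_wpM2l.
have E0 : E (vnorm (M *m 0)).
  by exists 0 => //=; rewrite /vnorm dotv0l sqrtr0.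
apply: le_trans (ub_le_sup ubE E0).
exact: vnorm_ge0.
Qed.

Definition convex_set n (C : set 'cV[R]_n) :=
  forall z p t, C z -> C p -> 0 <= t <= 1 -> C (t *: z + (1 - t) *: p).

Lemma lim_arg a b : 0 <= b -> (forall t, 0 < t <= 1 -> 0 <= a + t * b) -> 0 <= a.
Proof.
move=> b0 H; rewrite leNgt; apply/negP => a0.
have d0 : 0 < b - a by lra.
have := H (- a / (b - a)).
have -> : a + - a / (b - a) * b = - (a ^+ 2) / (b - a) by field; lra.
have t0 : 0 < - a / (b - a) by rewrite divr_gt0 //; lra.
have t1 : - a / (b - a) <= 1 by rewrite ler_pdivrMr //; lra.
rewrite t0 t1 => /(_ isT).
rewrite pmulr_lge0 ?invr_gt0 // oppr_ge0 => h.
have : 0 < a ^+ 2 by rewrite exprn_even_gt0 //= lt_eqF.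
lra.
Qed.

Lemma sq_le x y : 0 <= x -> x <= y -> x ^+ 2 <= y ^+ 2 :> R.
Proof. move=> x0 xy; rewrite !expr2; nra. Qed.

Lemma dotv_expand n (a d : 'cV[R]_n) t :
  dotv (a + t *: d) (a + t *: d) = dotv a a + 2%:R * t * dotv a d + t * t * dotv d d.
Proof. rewrite !dotvDl !dotvDr !dotvZl !dotvZr (dotvC d a); ring. Qed.

Lemma proj_vi n (C : set 'cV[R]_n) v p z :
  convex_set C -> is_proj C v p -> C z -> dotv (v - p) (z - p) <= 0.
Proof.
move=> cC [Cp Hp] Cz.
set w := dotv (p - v) (z - p).
have -> : dotv (v - p) (z - p) = - w by rewrite /w -dotvNl opprB.
rewrite oppr_le0.
apply: (@lim_arg _ (dotv (z - p) (z - p)) (dotv_ge0 _)) => t /andP [t0 t1].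
have t01 : 0 <= t <= 1 by rewrite t1 ltW.
have := Hp _ (cC z p t Cz Cp t01).
have -> : t *: z + (1 - t) *: p - v = (p - v) + t *: (z - p).
  by apply/matrixP => i j; rewrite !mxE; ring.
move=> /(sq_le (vnorm_ge0 _)); rewrite !vnorm_sqr.
rewrite dotv_expand -/w => h.
have : 0 <= t * (2%:R * w + t * dotv (z - p) (z - p)) by lra.
rewrite pmulr_rge0 //.
move=> h2; have : 0 <= t * dotv (z - p) (z - p) by rewrite mulr_ge0 ?dotv_ge0 ?ltW.
lra.
Qed.

Lemma box_convex n : convex_set (box n).
Proof.
move=> z p t Hz Hp /andP [t0 t1] i; rewrite !mxE.
have /andP [z0 z1] := Hz i; have /andP [p0 p1] := Hp i.
have t0' : 0 <= 1 - t by lra.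
have h1 : t * z i 0 <= t by rewrite -[leRHS]mulr1 ler_wpM2l.
have h2 : (1 - t) * p i 0 <= 1 - t by rewrite -[leRHS]mulr1 ler_wpM2l.
have h3 : 0 <= t * z i 0 by rewrite mulr_ge0.
have h4 : 0 <= (1 - t) * p i 0 by rewrite mulr_ge0.
apply/andP; split; lra.
Qed.

Lemma Y_convex m1 m2 : convex_set (Yset m1 m2).
Proof.
move=> z p t Hz Hp /andP [t0 t1] i; rewrite !mxE.
have z0 := Hz i; have p0 := Hp i.
have t0' : 0 <= 1 - t by lra.
by rewrite addr_ge0 // mulr_ge0.
Qed.

Lemma box0 n : @box R n 0.
Proof. by move=> i; rewrite mxE lexx ler01. Qed.

Lemma Y0 m1 m2 : @Yset R m1 m2 0.
Proof. by move=> i; rewrite mxE. Qed.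

End Vec2.
Section Prob.
Context {R : realType}.
Variables (n m1 m2 : nat) (Q : 'M[R]_n) (c : 'cV[R]_n) (A : 'M[R]_(m1, n))
  (b : 'cV[R]_m1) (B : 'M[R]_(m2, n)) (d : 'cV[R]_m2) (rho : R).
Hypothesis QT : Q^T = Q.

Definition phi (h : 'cV[R]_n) := dotv h (Q *m h) - rho * dotv h h.

Lemma symQ x y : dotv (Q *m x) y = dotv (Q *m y) x.
Proof. by rewrite dotvC dotv_mulmx QT. Qed.

Lemma taylor u h v :
  Lhat Q c A b B d rho (u + h) v =
  Lhat Q c A b B d rho u v + dotv (gradx Q c A B rho u v) h + phi h.
Proof.
rewrite /Lhat /gradx /phi !mulmxDr.
rewrite !(dotvDl, dotvDr, dotvNl, dotvNr, dotvZl, dotvZr).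
rewrite !dotv_mulmx QT (symQ h u) (dotvC (ones n) h) (dotvC h u).
ring.
Qed.

Notation L := (Lhat Q c A b B d rho).
Notation G := (gradx Q c A B rho).

Lemma phiN h : phi (- h) = phi h.
Proof. by rewrite /phi mulmxN !dotvNl !dotvNr !opprK. Qed.

Lemma phi_ge0 y0 : convex_fun (fun u => L u y0) -> forall h, 0 <= phi h.
Proof.
move=> cv h.
have := cv h (- h) (2%:R^-1).
have -> : 2%:R^-1 *: h + (1 - 2%:R^-1) *: - h = 0 :> 'cV[R]_n.
  by apply/matrixP => i j; rewrite !mxE; field.
have t01 : 0 <= (2%:R^-1 : R) <= 1.
  by apply/andP; split; [rewrite invr_ge0 ler0n | rewrite invf_le1 ?ler1n ?ltr0n].
move/(_ t01).
have e1 := taylor 0 h y0; have e2 := taylor 0 (- h) y0.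
rewrite add0r in e1; rewrite add0r phiN dotvNr in e2.
rewrite e1 e2.
set g := dotv _ h; set a := L 0 y0; set p := phi h.
lra.
Qed.



Lemma eps_phi xk xp y0 :
  L xk y0 - linz (fun u => L u y0) (fun u => G u y0) xk xp = phi (xk - xp).
Proof.
rewrite /linz.
have {1}-> : xk = xp + (xk - xp) by rewrite addrC subrK.
rewrite taylor; ring.
Qed.

Lemma grad_ineq y0 (phi0 : forall h, 0 <= phi h) z x0 :
  L x0 y0 + dotv (G x0 y0) (z - x0) <= L z y0.
Proof.
have {2}-> : z = x0 + (z - x0) by rewrite addrC subrK.
by rewrite taylor lerDl.
Qed.

Lemma phi_le h : 0 <= rho -> phi h <= opnorm Q * dotv h h.
Proof.
move=> r0; rewrite /phi.
have h1 : 0 <= rho * dotv h h by rewrite mulr_ge0 ?dotv_ge0.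
have h2 := dotv_le h (Q *m h).
have h3 : vnorm h * vnorm (Q *m h) <= vnorm h * (opnorm Q * vnorm h).
  by rewrite ler_wpM2l ?vnorm_ge0 ?opnorm_le.
have h4 : vnorm h * (opnorm Q * vnorm h) = opnorm Q * dotv h h.
  by rewrite -vnorm_sqr; ring.
lra.
Qed.


Lemma incl_y tau2 xk yk yp xb : 0 < tau2 ->
  is_proj (Yset m1 m2) (yp + tau2 *: (Kmat A B *m xb + rvec b d)) yk ->
  forall z, Yset m1 m2 z ->
  dotv (tau2^-1 *: (yp - yk) + Kmat A B *m (xb - xk)) (z - yk)
    <= L xk yk - L xk z.
Proof.
move=> t0 P z Cz.
have vi := proj_vi (@Y_convex R m1 m2) P Cz.
set w := yp + _ in vi.
have e : tau2^-1 *: (yp - yk) + Kmat A B *m (xb - xk) =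
         tau2^-1 *: (w - yk) - (Kmat A B *m xk + rvec b d).
  rewrite /w mulmxBr.
  move: (Kmat A B *m xb) (Kmat A B *m xk) (rvec b d) => a1 a2 a3.
  apply/matrixP => i j; rewrite !mxE; field; lra.
rewrite e dotvBl dotvZl /Lhat.
rewrite [dotv (_ + rvec b d) _]dotvBr (dotvC z) (dotvC yk).
have : tau2^-1 * dotv (w - yk) (z - yk) <= 0.
  by rewrite mulr_ge0_le0 // invr_ge0 ltW.
lra.
Qed.

Lemma incl_x tau1 xk xp y0 : 0 < tau1 -> (forall h, 0 <= phi h) ->
  is_proj (box n) (xp - tau1 *: G xp y0) xk ->
  forall z, box n z ->
  L xk y0 + dotv (tau1^-1 *: (xp - xk)) (z - xk) - phi (xk - xp) <= L z y0.
Proof.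
move=> t0 phi0 P z Cz.
have vi := proj_vi (@box_convex R n) P Cz.
have gi := grad_ineq y0 phi0 z xp.
have ta := taylor xp (xk - xp) y0.
rewrite addrC subrK in ta.
rewrite ta.
have e : tau1^-1 *: (xp - xk) = tau1^-1 *: (xp - tau1 *: G xp y0 - xk) + G xp y0.
  move: (G xp y0) => g.
  apply/matrixP => i j; rewrite !mxE; field; lra.
rewrite e [dotv (_ + G xp y0) _]dotvDl dotvZl.
have : tau1^-1 * dotv (xp - tau1 *: G xp y0 - xk) (z - xk) <= 0.
  by rewrite mulr_ge0_le0 // invr_ge0 ltW.
move: gi; rewrite !dotvBr.
lra.
Qed.

End Prob.
Section Aux.
Context {R : realType}.

Lemma sq_le_imp (x y : R) : 0 <= y -> x ^+ 2 <= y ^+ 2 -> x <= y.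
Proof.
move=> y0; rewrite -ler_sqrt ?sqr_ge0 // !sqrtr_sqr (ger0_norm y0) => h.
exact: le_trans (ler_norm x) h.
Qed.

Lemma amgm (a b k al be : R) : 0 <= a -> 0 <= b -> 0 <= k -> 0 < al -> 0 < be ->
  k ^+ 2 <= 4%:R * al * be -> k * a * b <= al * a ^+ 2 + be * b ^+ 2.
Proof.
move=> a0 b0 k0 al0 be0 hk.
apply: sq_le_imp; first by rewrite addr_ge0 // mulr_ge0 ?sqr_ge0 ?ltW.
have h1 : (k * a * b) ^+ 2 <= 4%:R * al * be * (a ^+ 2 * b ^+ 2).
  rewrite !exprMn.
  have : 0 <= a ^+ 2 * b ^+ 2 by rewrite mulr_ge0 ?sqr_ge0.
  move=> hab; have := ler_wpM2r hab hk.
  by rewrite -!mulrA.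
apply: le_trans h1 _.
have : 0 <= (al * a ^+ 2 - be * b ^+ 2) ^+ 2 by apply: sqr_ge0.
move=> h.
have -> : (al * a ^+ 2 + be * b ^+ 2) ^+ 2 =
  4%:R * al * be * (a ^+ 2 * b ^+ 2) + (al * a ^+ 2 - be * b ^+ 2) ^+ 2 by ring.
by rewrite lerDl.
Qed.

Lemma sqrt_bound (X Y Z cc : R) : 0 <= X -> 0 < Y -> 0 <= cc -> 0 <= Z ->
  X ^+ 2 * Y <= cc ^+ 2 * Z -> X <= cc * Num.sqrt Z / Num.sqrt Y.
Proof.
move=> X0 Y0 c0 Z0 h.
have sY : 0 < Num.sqrt Y by rewrite sqrtr_gt0.
rewrite ler_pdivlMr //.
have -> : X * Num.sqrt Y = Num.sqrt (X ^+ 2 * Y).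
  by rewrite sqrtrM ?sqr_ge0 // sqrtr_sqr ger0_norm.
have -> : cc * Num.sqrt Z = Num.sqrt (cc ^+ 2 * Z).
  by rewrite sqrtrM ?sqr_ge0 // sqrtr_sqr ger0_norm.
by rewrite ler_sqrt // mulr_ge0 ?sqr_ge0.
Qed.

Lemma choose_k (Af : nat -> R) (cst : R) (N : nat) : (1 <= N)%N ->
  (forall k, 0 <= Af k) -> Af 0%N <= N%:R * cst ->
  exists k, (1 <= k <= N)%N /\ Af k.-1 - Af k <= cst.
Proof.
move=> N1 A0 hA.
have main : forall M, (forall k, (1 <= k <= M.+1)%N -> cst < Af k.-1 - Af k) ->
    M.+1%:R * cst < Af 0%N - Af M.+1.
  elim=> [|M IH] H.
    by rewrite mul1r; apply: (H 1%N).
  have h1 : M.+1%:R * cst < Af 0%N - Af M.+1.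
    apply: IH => k /andP [k1 kM]; apply: H; rewrite k1 /=.
    exact: leq_trans kM _.
  have h2 := H M.+2 (ltac:(by rewrite /= leqnn)).

  rewrite /= in h2.
  have -> : M.+2%:R * cst = M.+1%:R * cst + cst by rewrite -[M.+2]addn1 natrD mulrDl mul1r.
  lra.
case: (pselect (exists k, (1 <= k <= N)%N /\ Af k.-1 - Af k <= cst)) => // hn.
exfalso.
case: N N1 hA hn => // M _ hA hn.
have : M.+1%:R * cst < Af 0%N - Af M.+1.
  apply: main => k hk; rewrite ltNge; apply/negP => hle; apply: hn; exists k; by split.
have := A0 M.+1.
lra.
Qed.

Lemma polar n (u v w : 'cV[R]_n) :
  2%:R * dotv (u - v) (w - v) = dotv (u - v) (u - v) + dotv (v - w) (v - w) - dotv (u - w) (u - w).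
Proof. rewrite !(dotvDl, dotvDr, dotvNl, dotvNr) (dotvC v u) (dotvC w u) (dotvC w v); ring. Qed.

Lemma dotv_subC n (u v : 'cV[R]_n) : dotv (u - v) (u - v) = dotv (v - u) (v - u).
Proof. by rewrite -vnorm_sqr vnorm_sub vnorm_sqr. Qed.

End Aux.
Unset Implicit Arguments.
Local Close Scope classical_set_scope.
Theorem mainTheorem2 (R : realType) (n m1 m2 : nat) (Q : 'M[R]_n) (c : 'cV[R]_n)
  (A : 'M[R]_(m1, n)) (b : 'cV[R]_m1) (B : 'M[R]_(m2, n)) (d : 'cV[R]_m2)
  (rho tau1 tau2 : R) (x : nat -> 'cV[R]_n) (y : nat -> 'cV[R]_(m1 + m2))
  (xs : 'cV[R]_n) (ys : 'cV[R]_(m1 + m2)) :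
  (0 < n)%N -> (0 < m1)%N -> (0 < m2)%N -> Q^T = Q -> 0 <= rho ->
  0 < tau1 -> 0 < tau2 ->
  box n (x 0%N) ->
  (forall k, (1 <= k)%N ->
     is_proj (Yset m1 m2)
       (y k.-1 + tau2 *: (Kmat A B *m xbar x k.-1 + rvec b d)) (y k)) ->
  (forall k, (1 <= k)%N ->
     is_proj (box n)
       (x k.-1 - tau1 *: gradx Q c A B rho (x k.-1) (y k)) (x k)) ->
  (forall k, (1 <= k)%N -> convex_fun (fun u => Lhat Q c A b B d rho u (y k))) ->
  tau1 * tau2 * opnorm (Kmat A B) ^+ 2 <= 1 / 4%:R ->
  4%:R * Lconst Q rho * tau1 <= 1 ->
  saddle (Phi Q c A b B d rho) xs ys ->
  let Delta0 := vnorm (xs - x 0%N) ^+ 2 / (2%:R * tau1)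
              + vnorm (ys - y 0%N) ^+ 2 / (2%:R * tau2) in
  forall N : nat, (1 <= N)%N ->
  exists k0 : nat, (1 <= k0 <= N)%N /\
    let ry := tau2^-1 *: (yup (Kmat A B) tau2 x y k0.-1 - yup (Kmat A B) tau2 x y k0) in
    let rx := tau1^-1 *: (x k0.-1 - x k0) in
    let eps := Lhat Q c A b B d rho (x k0) (y k0)
             - linz (fun u => Lhat Q c A b B d rho u (y k0))
                    (fun u => gradx Q c A B rho u (y k0)) (x k0) (x k0.-1) in
    [/\ subdiff (fun v => ((- Lhat Q c A b B d rho (x k0) v)%:E
                            + ext_indic (Yset m1 m2) v)%E) (y k0) ry,
        eps_subdiff (fun u => ((Lhat Q c A b B d rho u (y k0))%:E
                            + ext_indic (box n) u)%E) eps (x k0) rx,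
        vnorm ry <= Num.sqrt (3%:R * Delta0) / Num.sqrt (tau2 * N%:R),
        vnorm rx <= 2%:R * Num.sqrt Delta0 / Num.sqrt (tau1 * N%:R) &
        eps <= Delta0 / (2%:R * N%:R)].
Proof.
move=> n0 m10 m20 QT rho0 t10 t20 bx0 Py Px Cv hK hL sad Delta0 N N1.
have indT : forall T (C : set T) u, C u -> ext_indic (R:=R) C u = 0%E.
  by move=> T C u Cu; rewrite /ext_indic asboolT.
have indF : forall T (C : set T) u, ~ C u -> ext_indic (R:=R) C u = +oo%E.
  by move=> T C u Cu; rewrite /ext_indic asboolF.
have [xsB [ysY [Hys Hxs]]] : box n xs /\ Yset m1 m2 ys /\
   (forall v, Yset m1 m2 v -> Lhat Q c A b B d rho xs v <= Lhat Q c A b B d rho xs ys) /\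
   (forall u, box n u -> Lhat Q c A b B d rho xs ys <= Lhat Q c A b B d rho u ys).
  case: sad => s1 s2; rewrite /Phi in s1 s2.
  have B0 := @box0 R n; have Y0' := @Y0 R m1 m2.
  case: (pselect (box n xs)) => hx; case: (pselect (Yset m1 m2 ys)) => hy.
  - do 2 (split => //); split.
      move=> v Yv; have := s1 v; rewrite (indT _ _ _ hx) (indT _ _ _ hy) (indT _ _ _ Yv).
      by rewrite !adde0 !sube0 lee_fin.
    move=> u Bu; have := s2 u; rewrite (indT _ _ _ hx) (indT _ _ _ hy) (indT _ _ _ Bu).
    by rewrite !adde0 !sube0 lee_fin.
  - exfalso; have := s1 0; rewrite (indT _ _ _ hx) (indF _ _ _ hy) (indT _ _ _ Y0').
    by rewrite !adde0 !sube0.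
  - exfalso; have := s2 0; rewrite (indF _ _ _ hx) (indT _ _ _ hy) (indT _ _ _ B0).
    by rewrite !adde0 !sube0.
  - exfalso; have h1 := s1 0; have h2 := s2 0.
    rewrite (indF _ _ _ hx) (indF _ _ _ hy) (indT _ _ _ Y0') in h1.
    rewrite (indF _ _ _ hx) (indF _ _ _ hy) (indT _ _ _ B0) in h2.
    move: h1 => /=; rewrite addeNy addey // addye //.
have xbE : forall k, xbar x k - x k = x k - x k.-1.
  by move=> k; rewrite /xbar; apply/matrixP => i j; rewrite !mxE; ring.
have yupE : forall k, yup (Kmat A B) tau2 x y k = y k + tau2 *: (Kmat A B *m (x k - x k.-1)).
  case=> [|k]; rewrite /yup /=; first by rewrite subrr mulmx0 scaler0 addr0.
  by rewrite xbE.
have ryE : forall k, (1 <= k)%N ->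
   tau2^-1 *: (yup (Kmat A B) tau2 x y k.-1 - yup (Kmat A B) tau2 x y k)
   = tau2^-1 *: (y k.-1 - y k) + Kmat A B *m (xbar x k.-1 - x k).
  move=> k k1; rewrite !yupE /xbar !(mulmxBr, mulmxDr) -!scalemxAr.
  move: (Kmat A B *m x k) (Kmat A B *m x k.-1) (Kmat A B *m x k.-1.-1) => a1 a2 a3.
  apply/matrixP => i j; rewrite !mxE; field; by rewrite gt_eqF.
have phi0 := @phi_ge0 R n m1 m2 Q c A b B d rho QT (y 1%N) (Cv 1%N isT).
pose Af j := dotv (x j - xs) (x j - xs) / (2%:R * tau1) +
  dotv (yup (Kmat A B) tau2 x y j - ys) (yup (Kmat A B) tau2 x y j - ys) / (2%:R * tau2).
set kap := opnorm (Kmat A B).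
have kap0 : 0 <= kap by apply: opnorm_ge0.
have kapb : kap ^+ 2 <= (4%:R * tau1 * tau2)^-1.
  have tt : 0 < tau1 * tau2 by rewrite mulr_gt0.
  have e1 : kap ^+ 2 = (tau1 * tau2 * kap ^+ 2) / (tau1 * tau2).
    by field; rewrite !gt_eqF.
  have e2 : (4%:R * tau1 * tau2)^-1 = (1 / 4%:R) / (tau1 * tau2).
    by field; rewrite !gt_eqF.
  rewrite e1 e2 ler_wpM2r // invr_ge0 ltW //.
have opQb : opnorm Q * tau1 <= 8%:R^-1.
  have : 0 <= rho * tau1 by apply: mulr_ge0 => //; apply: ltW.
  move: hL; rewrite /Lconst.
  move=> h1 h2.
  have e : 4%:R * (2%:R * (opnorm Q + rho)) * tau1 = 8%:R * (opnorm Q * tau1) + 8%:R * (rho * tau1).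
    ring.
  rewrite e in h1.
  lra.
have key : forall k, (1 <= k)%N ->
  let p := dotv (x k.-1 - x k) (x k.-1 - x k) / tau1 in
  let q := dotv (yup (Kmat A B) tau2 x y k.-1 - yup (Kmat A B) tau2 x y k)
                (yup (Kmat A B) tau2 x y k.-1 - yup (Kmat A B) tau2 x y k) / tau2 in
  [/\ p <= 4%:R * (Af k.-1 - Af k), q <= 3%:R * (Af k.-1 - Af k) &
      phi Q rho (x k - x k.-1) <= p / 8%:R].
  move=> k k1 p q.
  have [xkB _] := Px k k1; have [ykY _] := Py k k1.
  have iy := @incl_y R n m1 m2 Q c A b B d rho tau2 (x k) (y k) (y k.-1) (xbar x k.-1) t20 (Py k k1) ys ysY.
  have ix := @incl_x R n m1 m2 Q c A b B d rho QT tau1 (x k) (x k.-1) (y k) t10 phi0 (Px k k1) xs xsB.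
  have s1 := Hys (y k) ykY; have s2 := Hxs (x k) xkB.
  rewrite -ryE // in iy.
  set Yp := yup (Kmat A B) tau2 x y k.-1 in iy q *.
  set Yk := yup (Kmat A B) tau2 x y k in iy q *.
  have eyk : ys - y k = (ys - Yk) + tau2 *: (Kmat A B *m (x k - x k.-1)).
    rewrite /Yk yupE; move: (Kmat A B *m _) => w; apply/matrixP=> i j; rewrite !mxE; ring.
  rewrite eyk dotvDr !dotvZl dotvZr mulKf ?gt_eqF // in iy.
  rewrite dotvZl in ix.
  set cr := dotv (Yp - Yk) (Kmat A B *m (x k - x k.-1)) in iy.
  set Y1 := dotv (Yp - Yk) (ys - Yk) in iy.
  set X1 := dotv (x k.-1 - x k) (xs - x k) in ix.
  have p1 := polar Yp Yk ys; have p2 := polar (x k.-1) (x k) xs.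
  rewrite -/Y1 in p1; rewrite -/X1 in p2.
  have X1e : X1 = (2%:R * X1) / 2%:R by field.
  have Y1e : Y1 = (2%:R * Y1) / 2%:R by field.
  have eD : Af k.-1 - Af k + tau1^-1 * X1 + tau2^-1 * Y1 = p / 2%:R + q / 2%:R.
    rewrite X1e Y1e p1 p2 /Af -/Yp -/Yk /p /q.
    rewrite (dotv_subC Yk ys) (dotv_subC (x k) xs).
    field; by rewrite !gt_eqF.
  have ph := @phi_le R n Q rho (x k - x k.-1) rho0.
  rewrite dotv_subC in ph.
  have p0 : 0 <= p by rewrite /p divr_ge0 ?dotv_ge0 // ltW.
  have q0 : 0 <= q by rewrite /q divr_ge0 ?dotv_ge0 // ltW.
  have ph2 : opnorm Q * dotv (x k.-1 - x k) (x k.-1 - x k) <= p / 8%:R.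
    have e : opnorm Q * dotv (x k.-1 - x k) (x k.-1 - x k) = (opnorm Q * tau1) * p.
      by rewrite /p; field; rewrite gt_eqF.
    rewrite e; apply: le_trans (ler_wpM2r p0 opQb) _.
    by rewrite mulrC lexx.
  set a := vnorm (x k.-1 - x k).
  set bb := vnorm (Yp - Yk).
  have cb : - (kap * a * bb) <= cr.
    have h := dotv_ge (Yp - Yk) (Kmat A B *m (x k - x k.-1)).
    have h2 := opnorm_le (Kmat A B) (x k - x k.-1).
    rewrite vnorm_sub -/a -/kap in h2.
    have h3 := ler_wpM2l (vnorm_ge0 (Yp - Yk)) h2.
    rewrite -/bb in h h3.
    rewrite /cr; apply: le_trans h.
    rewrite lerN2; apply: le_trans h3 _.
    by rewrite le_eqVlt; apply/orP; left; apply/eqP; ring.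
  have a0 : 0 <= a := vnorm_ge0 _.
  have b0 : 0 <= bb := vnorm_ge0 _.
  have ea : a ^+ 2 = p * tau1 by rewrite /a vnorm_sqr /p; field; rewrite gt_eqF.
  have eb : bb ^+ 2 = q * tau2 by rewrite /bb vnorm_sqr /q; field; rewrite gt_eqF.
  have am1 := @amgm R a bb kap (8%:R * tau1)^-1 (2%:R * tau2)^-1 a0 b0 kap0.
  have am2 := @amgm R a bb kap (3%:R / (8%:R * tau1)) (6%:R * tau2)^-1 a0 b0 kap0.
  rewrite ea eb in am1 am2.
  have e4 : 4%:R * (8%:R * tau1)^-1 * (2%:R * tau2)^-1 = (4%:R * tau1 * tau2)^-1.
    by field; rewrite !gt_eqF.
  have e5 : 4%:R * (3%:R / (8%:R * tau1)) * (6%:R * tau2)^-1 = (4%:R * tau1 * tau2)^-1.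
    by field; rewrite !gt_eqF.
  have e6 : (8%:R * tau1)^-1 * (p * tau1) + (2%:R * tau2)^-1 * (q * tau2) = p / 8%:R + q / 2%:R.
    by field; rewrite !gt_eqF.
  have e7 : 3%:R / (8%:R * tau1) * (p * tau1) + (6%:R * tau2)^-1 * (q * tau2) = 3%:R * p / 8%:R + q / 6%:R.
    by field; rewrite !gt_eqF.
  rewrite e4 e6 in am1; rewrite e5 e7 in am2.
  have g1 : 0 < (8%:R * tau1)^-1 by rewrite invr_gt0 mulr_gt0.
  have g2 : 0 < (2%:R * tau2)^-1 by rewrite invr_gt0 mulr_gt0.
  have g3 : 0 < 3%:R / (8%:R * tau1) by rewrite divr_gt0 // mulr_gt0.
  have g4 : 0 < (6%:R * tau2)^-1 by rewrite invr_gt0 mulr_gt0.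
  have {}am1 := am1 g1 g2 kapb.
  have {}am2 := am2 g3 g4 kapb.
  split; lra.
have Af0 : forall j, 0 <= Af j.
  move=> j; rewrite /Af addr_ge0 // divr_ge0 ?dotv_ge0 // mulr_ge0 // ltW //.
have NP : 0 < N%:R :> R by rewrite ltr0n.
have D0 : 0 <= Delta0.
  by rewrite /Delta0 addr_ge0 // divr_ge0 ?sqr_ge0 // mulr_ge0 // ltW.
have hA0 : Af 0%N <= N%:R * (Delta0 / N%:R).
  rewrite mulrC divfK ?gt_eqF // /Af /Delta0 /yup /= -!vnorm_sqr.
  by rewrite (vnorm_sub (x 0%N)) (vnorm_sub (y 0%N)) lexx.
have [k0 [k0N hD]] := choose_k N1 Af0 hA0.
exists k0; split => //.
have k01 : (1 <= k0)%N by case/andP: k0N.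
have [p4 q3 phb] := key k0 k01.
have [xkB _] := Px k0 k01; have [ykY _] := Py k0 k01.
move=> ry rx eps.
have epsE : eps = phi Q rho (x k0 - x k0.-1) by rewrite /eps eps_phi.
split.
- move=> z; rewrite (indT _ _ _ ykY) adde0.
  case: (pselect (Yset m1 m2 z)) => hz.
    rewrite (indT _ _ _ hz) adde0 -EFinD lee_fin.
    have := @incl_y R n m1 m2 Q c A b B d rho tau2 (x k0) (y k0) (y k0.-1) (xbar x k0.-1) t20 (Py k0 k01) z hz.
    rewrite -ryE // -/ry; lra.
  by rewrite (indF _ _ _ hz) addey // leey.
- move=> z; rewrite (indT _ _ _ xkB) adde0.
  case: (pselect (box n z)) => hz.
    rewrite (indT _ _ _ hz) adde0 -EFinD lee_fin.
    have := @incl_x R n m1 m2 Q c A b B d rho QT tau1 (x k0) (x k0.-1) (y k0) t10 phi0 (Px k0 k01) z hz.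
    rewrite -/rx -epsE; lra.
  by rewrite (indF _ _ _ hz) addey // leey.
- have it0 : 0 <= tau2^-1 by rewrite invr_ge0 ltW.
  rewrite /ry vnormZ ger0_norm //.
  rewrite -[Num.sqrt (3%:R * Delta0)]mul1r; apply: sqrt_bound.
  + by rewrite mulr_ge0 ?vnorm_ge0 // invr_ge0 ltW.
  + by rewrite mulr_gt0.
  + by [].
  + by rewrite mulr_ge0.
  set q := dotv _ _ / tau2 in q3.
  have e : (tau2^-1 * vnorm (yup (Kmat A B) tau2 x y k0.-1 - yup (Kmat A B) tau2 x y k0)) ^+ 2
     * (tau2 * N%:R) = q * N%:R.
    by rewrite exprMn vnorm_sqr /q; field; rewrite gt_eqF.
  rewrite e expr1n mul1r.
  have h := ler_wpM2r (ltW NP) (le_trans q3 (ler_wpM2l (ler0n _ 3) hD)).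
  apply: le_trans h _.
  have -> : 3%:R * (Delta0 / N%:R) * N%:R = 3%:R * Delta0 by field; rewrite gt_eqF.
  by [].
- have it0 : 0 <= tau1^-1 by rewrite invr_ge0 ltW.
  rewrite /rx vnormZ ger0_norm //.
  apply: sqrt_bound.
  + by rewrite mulr_ge0 ?vnorm_ge0 // invr_ge0 ltW.
  + by rewrite mulr_gt0.
  + by rewrite ler0n.
  + by [].
  set p := dotv _ _ / tau1 in p4.
  have e : (tau1^-1 * vnorm (x k0.-1 - x k0)) ^+ 2 * (tau1 * N%:R) = p * N%:R.
    by rewrite exprMn vnorm_sqr /p; field; rewrite gt_eqF.
  rewrite e.
  have h := ler_wpM2r (ltW NP) (le_trans p4 (ler_wpM2l (ler0n _ 4) hD)).
  apply: le_trans h _.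
  have -> : 4%:R * (Delta0 / N%:R) * N%:R = 2%:R ^+ 2 * Delta0 by field; rewrite gt_eqF.
  by [].
- rewrite epsE.
  have e : Delta0 / (2%:R * N%:R) = (Delta0 / N%:R) / 2%:R by field; rewrite gt_eqF.
  rewrite e; lra.
Qed.
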